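(* The distributive $\lambda$-calculus is confluent: for all terms $t,s_1,s_2$, if $t\to_{\mathsf{dist}}^* s_1$ and $t\to_{\mathsf{dist}}^* s_2$, then there exists a term $u$ such that $s_1\to_{\mathsf{dist}}^* u$ and $s_2\to_{\mathsf{dist}}^* u$.
   Context: Terms of the distributive $\lambda$-calculus are given by the grammar $t,s,u ::= x \mid \lambda x.t \mid ts \mid \langle t,s\rangle \mid \pi_1 t \mid \pi_2 t$, considered up to $\alpha$-renaming; $t\{x:=s\}$ denotes capture-avoiding substitution. The top-level rules are: $(\lambda x.t)s \mapsto_\beta t\{x:=s\}$; $\pi_i\langle t_1,t_2\rangle \mapsto_{\pi_i} t_i$ for $i=1,2$; $\langle t,s\rangle u \mapsto_{@_\times} \langle tu, su\rangle$; $\pi_i(\lambda x.t)\mapsto_{\pi_\lambda} \lambda x.\pi_i t$ for $i=1,2$. The relation $\to_{\mathsf{dist}}$ is the closure of the union of these rules under all term constructors (i.e. a rule may be applied to any subterm); $\to_{\mathsf{dist}}^*$ is its reflexive-transitive closure. *)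

(* Defs.v *)
(* Terms of the distributive lambda-calculus, up to alpha-renaming,
   represented with de Bruijn indices (so alpha-equivalent terms are equal). *)
From Stdlib Require Import Arith Relations.

Inductive term : Type :=
| Var : nat -> term
| Lam : term -> term
| App : term -> term -> term
| Pair : term -> term -> term
| Proj1 : term -> term
| Proj2 : term -> term.

Fixpoint lift (d c : nat) (t : term) : term :=
  match t with
  | Var n => if Nat.ltb n c then Var n else Var (n + d)
  | Lam t => Lam (lift d (S c) t)
  | App t s => App (lift d c t) (lift d c s)
  | Pair t s => Pair (lift d c t) (lift d c s)
  | Proj1 t => Proj1 (lift d c t)
  | Proj2 t => Proj2 (lift d c t)
  end.

(* subst k s t : capture-avoiding substitution of s for index k in t,
   decrementing the free indices above k (the binder is removed). *)
Fixpoint subst (k : nat) (s : term) (t : term) : term :=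
  match t with
  | Var n =>
      match Nat.compare n k with
      | Lt => Var n
      | Eq => lift k 0 s
      | Gt => Var (pred n)
      end
  | Lam t => Lam (subst (S k) s t)
  | App t1 t2 => App (subst k s t1) (subst k s t2)
  | Pair t1 t2 => Pair (subst k s t1) (subst k s t2)
  | Proj1 t => Proj1 (subst k s t)
  | Proj2 t => Proj2 (subst k s t)
  end.

(* t{x:=s} for the body t of \x.t *)
Definition beta_subst (t s : term) : term := subst 0 s t.

Inductive top_step : term -> term -> Prop :=
| R_beta : forall t s, top_step (App (Lam t) s) (beta_subst t s)
| R_pi1 : forall t1 t2, top_step (Proj1 (Pair t1 t2)) t1
| R_pi2 : forall t1 t2, top_step (Proj2 (Pair t1 t2)) t2
| R_app_pair : forall t s u, top_step (App (Pair t s) u) (Pair (App t u) (App s u))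
| R_pi1_lam : forall t, top_step (Proj1 (Lam t)) (Lam (Proj1 t))
| R_pi2_lam : forall t, top_step (Proj2 (Lam t)) (Lam (Proj2 t)).

Inductive dist_step : term -> term -> Prop :=
| S_top : forall t t', top_step t t' -> dist_step t t'
| S_lam : forall t t', dist_step t t' -> dist_step (Lam t) (Lam t')
| S_appl : forall t t' s, dist_step t t' -> dist_step (App t s) (App t' s)
| S_appr : forall t s s', dist_step s s' -> dist_step (App t s) (App t s')
| S_pairl : forall t t' s, dist_step t t' -> dist_step (Pair t s) (Pair t' s)
| S_pairr : forall t s s', dist_step s s' -> dist_step (Pair t s) (Pair t s')
| S_proj1 : forall t t', dist_step t t' -> dist_step (Proj1 t) (Proj1 t')
| S_proj2 : forall t t', dist_step t t' -> dist_step (Proj2 t) (Proj2 t').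

Definition dist_star : term -> term -> Prop := clos_refl_trans term dist_step.

(* Main.v *)
Require Import Defs.
From Stdlib Require Import Relations Arith Lia.

Ltac vcase :=
  repeat (first [ progress simpl
    | match goal with
      | |- context [Nat.ltb ?a ?b] => destruct (Nat.ltb_spec a b)
      | |- context [Nat.compare ?a ?b] => destruct (Nat.compare_spec a b)
      end ]); try (f_equal; lia); try lia.

Lemma lift_lift_perm : forall t d k i j, i <= j ->
  lift d (j + k) (lift k i t) = lift k i (lift d j t).
Proof.
  induction t; intros d k i j H; simpl; try (f_equal; auto; fail).
  - vcase.
  - f_equal. apply (IHt d k (S i) (S j)). lia.
Qed.

Lemma lift_lift_fuse : forall t j k c i, c <= i <= c + k ->
  lift j i (lift k c t) = lift (j + k) c t.
Proof.
  induction t; intros j k c i H; simpl; try (f_equal; auto; fail).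
  - vcase.
  - f_equal. apply IHt. lia.
Qed.

Lemma subst_lift_cancel : forall t u j m c, c <= j <= c + m ->
  subst j u (lift (S m) c t) = lift m c t.
Proof.
  induction t; intros u j m c H; simpl; try (f_equal; auto; fail).
  - vcase.
  - f_equal. apply IHt. lia.
Qed.

Lemma lift_subst : forall t s d k c,
  lift d (k + c) (subst k s t) = subst k (lift d c s) (lift d (S (k + c)) t).
Proof.
  induction t; intros s d k c; simpl; try (f_equal; auto; fail).
  - destruct (Nat.compare_spec n k).
    + subst. destruct (Nat.ltb_spec k (S (k + c))); [|lia]. simpl.
      rewrite Nat.compare_refl. rewrite Nat.add_comm.
      apply (lift_lift_perm s d k 0 c). lia.
    + destruct (Nat.ltb_spec n (S (k + c))); [|lia]. simpl.
      destruct (Nat.compare_spec n k); try lia. vcase.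
    + vcase.
  - f_equal. apply (IHt s d (S k) c).
Qed.

Lemma subst_lift : forall b s j k i, i <= k ->
  subst (j + k) s (lift j i b) = lift j i (subst k s b).
Proof.
  induction b; intros s j k i H; simpl; try (f_equal; auto; fail).
  - destruct (Nat.ltb_spec n i).
    + simpl. destruct (Nat.compare_spec n (j + k)); try lia.
      destruct (Nat.compare_spec n k); try lia. simpl.
      destruct (Nat.ltb_spec n i); try lia. reflexivity.
    + simpl. destruct (Nat.compare_spec (n + j) (j + k));
      destruct (Nat.compare_spec n k); try lia.
      all: try (subst; symmetry; apply lift_lift_fuse; lia).
      all: vcase.
  - f_equal. rewrite <- Nat.add_succ_r. apply IHb. lia.
Qed.

Lemma subst_subst : forall a b s j k,
  subst (j + k) s (subst j b a) = subst j (subst k s b) (subst (S (j + k)) s a).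
Proof.
  induction a; intros b s j k; simpl; try (f_equal; auto; fail).
  - destruct (Nat.compare_spec n j).
    + subst. destruct (Nat.compare_spec j (S (j + k))); try lia. simpl.
      rewrite Nat.compare_refl. apply (subst_lift b s j k 0). lia.
    + destruct (Nat.compare_spec n (S (j + k))); try lia. simpl.
      destruct (Nat.compare_spec n (j + k)); try lia.
      destruct (Nat.compare_spec n j); try lia. reflexivity.
    + destruct (Nat.compare_spec n (S (j + k))).
      * subst. simpl. destruct (Nat.compare_spec (j + k) (j + k)); try lia.
        symmetry. apply (subst_lift_cancel s (subst k s b) j (j + k) 0). lia.
      * simpl. destruct (Nat.compare_spec (pred n) (j + k)); try lia.
        destruct (Nat.compare_spec n j); try lia. reflexivity.
      * simpl. destruct (Nat.compare_spec (pred n) (j + k)); try lia.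
        destruct (Nat.compare_spec (pred n) j); try lia. reflexivity.
  - f_equal. apply (IHa b s (S j) k).
Qed.

Inductive par : term -> term -> Prop :=
| P_var : forall n, par (Var n) (Var n)
| P_lam : forall t t', par t t' -> par (Lam t) (Lam t')
| P_app : forall t t' s s', par t t' -> par s s' -> par (App t s) (App t' s')
| P_pair : forall t t' s s', par t t' -> par s s' -> par (Pair t s) (Pair t' s')
| P_proj1 : forall t t', par t t' -> par (Proj1 t) (Proj1 t')
| P_proj2 : forall t t', par t t' -> par (Proj2 t) (Proj2 t')
| P_beta : forall t t' s s', par t t' -> par s s' -> par (App (Lam t) s) (subst 0 s' t')
| P_pi1 : forall t t' s, par t t' -> par (Proj1 (Pair t s)) t'
| P_pi2 : forall t s s', par s s' -> par (Proj2 (Pair t s)) s'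
| P_apppair : forall t t' s s' u u', par t t' -> par s s' -> par u u' ->
    par (App (Pair t s) u) (Pair (App t' u') (App s' u'))
| P_pi1lam : forall t t', par t t' -> par (Proj1 (Lam t)) (Lam (Proj1 t'))
| P_pi2lam : forall t t', par t t' -> par (Proj2 (Lam t)) (Lam (Proj2 t')).

Lemma par_refl : forall t, par t t.
Proof. induction t; constructor; auto. Qed.

Lemma par_lift : forall t t', par t t' -> forall d c, par (lift d c t) (lift d c t').
Proof.
  induction 1; intros d c; simpl; try (constructor; auto; fail).
  - apply par_refl.
  - pose proof (lift_subst t' s' d 0 c) as E. simpl in E. rewrite E.
    constructor; auto.
Qed.

Lemma par_subst : forall t t', par t t' -> forall s s' k, par s s' ->
  par (subst k s t) (subst k s' t').
Proof.
  induction 1; intros a a' k Ha; simpl; try (constructor; auto; fail).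
  - destruct (Nat.compare n k); try constructor. apply par_lift; auto.
  - pose proof (subst_subst t' s' a' 0 k) as E. simpl in E. rewrite E.
    constructor; auto.
Qed.

Fixpoint cd (t : term) : term :=
  match t with
  | Var n => Var n
  | Lam a => Lam (cd a)
  | App a b =>
      match a with
      | Lam a1 => subst 0 (cd b) (cd a1)
      | Pair a1 a2 => Pair (App (cd a1) (cd b)) (App (cd a2) (cd b))
      | _ => App (cd a) (cd b)
      end
  | Pair a b => Pair (cd a) (cd b)
  | Proj1 a =>
      match a with
      | Pair a1 a2 => cd a1
      | Lam a1 => Lam (Proj1 (cd a1))
      | _ => Proj1 (cd a)
      end
  | Proj2 a =>
      match a with
      | Pair a1 a2 => cd a2
      | Lam a1 => Lam (Proj2 (cd a1))
      | _ => Proj2 (cd a)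
      end
  end.

Lemma par_lam_inv : forall a t, par (Lam a) t -> exists a', t = Lam a' /\ par a a'.
Proof. intros a t H; inversion H; subst; eauto. Qed.

Lemma par_pair_inv : forall a b t, par (Pair a b) t ->
  exists a' b', t = Pair a' b' /\ par a a' /\ par b b'.
Proof. intros a b t H; inversion H; subst; eauto 6. Qed.

Lemma triangle : forall t t', par t t' -> par t' (cd t).
Proof.
  induction 1; simpl; try (constructor; auto; fail).
  - destruct t; try (constructor; auto; fail).
    + destruct (par_lam_inv _ _ H) as [x [-> Hx]].
      destruct (par_lam_inv _ _ IHpar1) as [y [Ey Hy]]. injection Ey as <-.
      constructor; auto.
    + destruct (par_pair_inv _ _ _ H) as [x [y [-> _]]].
      destruct (par_pair_inv _ _ _ IHpar1) as [x' [y' [Ey [Hx Hy]]]].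
      injection Ey as <- <-. constructor; auto.
  - destruct t; try (constructor; auto; fail).
    + destruct (par_lam_inv _ _ H) as [x [-> Hx]].
      destruct (par_lam_inv _ _ IHpar) as [y [Ey Hy]]. injection Ey as <-.
      constructor; auto.
    + destruct (par_pair_inv _ _ _ H) as [x [y [-> _]]].
      destruct (par_pair_inv _ _ _ IHpar) as [x' [y' [Ey [Hx Hy]]]].
      injection Ey as <- <-. constructor; auto.
  - destruct t; try (constructor; auto; fail).
    + destruct (par_lam_inv _ _ H) as [x [-> Hx]].
      destruct (par_lam_inv _ _ IHpar) as [y [Ey Hy]]. injection Ey as <-.
      constructor; auto.
    + destruct (par_pair_inv _ _ _ H) as [x [y [-> _]]].
      destruct (par_pair_inv _ _ _ IHpar) as [x' [y' [Ey [Hx Hy]]]].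
      injection Ey as <- <-. constructor; auto.
  - apply par_subst; auto.
  - assumption.
  - assumption.
  - constructor; constructor; auto.
  - constructor; constructor; auto.
  - constructor; constructor; auto.
Qed.

Definition par_star := clos_refl_trans_1n term par.

Lemma strip : forall t s1, par t s1 -> forall s2, par_star t s2 ->
  exists u, par_star s1 u /\ par s2 u.
Proof.
  intros t s1 H s2 H2. revert s1 H.
  induction H2 as [t|t m s2 Htm Hms IH]; intros s1 H.
  - exists s1. split; [constructor | auto].
  - destruct (IH (cd t) (triangle _ _ Htm)) as [u [Hu1 Hu2]].
    exists u. split; auto.
    econstructor. apply (triangle _ _ H). exact Hu1.
Qed.

Lemma par_star_trans : forall a b c, par_star a b -> par_star b c -> par_star a c.
Proof.
  intros a b c H1 H2. unfold par_star in *.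
  apply clos_rt_rt1n. eapply rt_trans; apply clos_rt1n_rt; eauto.
Qed.

Lemma par_conf : forall t s1, par_star t s1 -> forall s2, par_star t s2 ->
  exists u, par_star s1 u /\ par_star s2 u.
Proof.
  intros t s1 H. induction H as [t|t m s1 Htm Hms IH]; intros s2 H2.
  - exists s2. split; auto. constructor.
  - destruct (strip _ _ Htm _ H2) as [v [Hv1 Hv2]].
    destruct (IH v Hv1) as [u [Hu1 Hu2]].
    exists u. split; auto. econstructor; eauto.
Qed.

Lemma step_par : forall t t', dist_step t t' -> par t t'.
Proof.
  induction 1; try (constructor; auto using par_refl; fail).
  all: destruct H; try (constructor; auto using par_refl; fail).
  all: unfold beta_subst; constructor; apply par_refl.
Qed.

Lemma dist_star_lam : forall a b, dist_star a b -> dist_star (Lam a) (Lam b).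
Proof. induction 1; [apply rt_step; apply S_lam; auto | apply rt_refl | eapply rt_trans; eauto]. Qed.
Lemma dist_star_appl : forall a b c, dist_star a b -> dist_star (App a c) (App b c).
Proof. induction 1; [apply rt_step; apply S_appl; auto | apply rt_refl | eapply rt_trans; eauto]. Qed.
Lemma dist_star_appr : forall a b c, dist_star a b -> dist_star (App c a) (App c b).
Proof. induction 1; [apply rt_step; apply S_appr; auto | apply rt_refl | eapply rt_trans; eauto]. Qed.
Lemma dist_star_pairl : forall a b c, dist_star a b -> dist_star (Pair a c) (Pair b c).
Proof. induction 1; [apply rt_step; apply S_pairl; auto | apply rt_refl | eapply rt_trans; eauto]. Qed.
Lemma dist_star_pairr : forall a b c, dist_star a b -> dist_star (Pair c a) (Pair c b).
Proof. induction 1; [apply rt_step; apply S_pairr; auto | apply rt_refl | eapply rt_trans; eauto]. Qed.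
Lemma dist_star_proj1 : forall a b, dist_star a b -> dist_star (Proj1 a) (Proj1 b).
Proof. induction 1; [apply rt_step; apply S_proj1; auto | apply rt_refl | eapply rt_trans; eauto]. Qed.
Lemma dist_star_proj2 : forall a b, dist_star a b -> dist_star (Proj2 a) (Proj2 b).
Proof. induction 1; [apply rt_step; apply S_proj2; auto | apply rt_refl | eapply rt_trans; eauto]. Qed.

Lemma top_star : forall a b, top_step a b -> dist_star a b.
Proof. intros; apply rt_step; constructor; auto. Qed.

Lemma app2 : forall a a' b b', dist_star a a' -> dist_star b b' -> dist_star (App a b) (App a' b').
Proof. intros; eapply rt_trans; [apply dist_star_appl | apply dist_star_appr]; eauto. Qed.
Lemma pair2 : forall a a' b b', dist_star a a' -> dist_star b b' -> dist_star (Pair a b) (Pair a' b').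
Proof. intros; eapply rt_trans; [apply dist_star_pairl | apply dist_star_pairr]; eauto. Qed.

Lemma par_star_dist : forall t t', par t t' -> dist_star t t'.
Proof.
  induction 1.
  - apply rt_refl.
  - apply dist_star_lam; auto.
  - apply app2; auto.
  - apply pair2; auto.
  - apply dist_star_proj1; auto.
  - apply dist_star_proj2; auto.
  - eapply rt_trans. apply app2; [apply dist_star_lam|]; eauto.
    apply top_star. apply (R_beta t' s').
  - eapply rt_trans. apply dist_star_proj1, dist_star_pairl; eauto. apply top_star; constructor.
  - eapply rt_trans. apply dist_star_proj2, dist_star_pairr; eauto. apply top_star; constructor.
  - eapply rt_trans. apply app2; [apply pair2|]; eauto.
    eapply rt_trans. apply top_star; constructor. apply pair2; apply rt_refl.
  - eapply rt_trans. apply dist_star_proj1, dist_star_lam; eauto. apply top_star; constructor.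
  - eapply rt_trans. apply dist_star_proj2, dist_star_lam; eauto. apply top_star; constructor.
Qed.

Lemma dist_to_par : forall t t', dist_star t t' -> par_star t t'.
Proof.
  intros t t' H. unfold par_star. apply clos_rt_rt1n.
  induction H; [apply rt_step, step_par; auto | apply rt_refl | eapply rt_trans; eauto].
Qed.

Lemma par_to_dist : forall t t', par_star t t' -> dist_star t t'.
Proof.
  induction 1; [apply rt_refl | eapply rt_trans; [apply par_star_dist|]; eauto].
Qed.

Theorem theorem1 : forall t s1 s2 : term,
  dist_star t s1 -> dist_star t s2 ->
  exists u : term, dist_star s1 u /\ dist_star s2 u.
Proof.
  intros t s1 s2 H1 H2.
  destruct (par_conf t s1 (dist_to_par _ _ H1) s2 (dist_to_par _ _ H2)) as [u [A B]].
  exists u; split; apply par_to_dist; auto.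
Qed.
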